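(* Let $w\in\Sigma^*$ label a path in the NFA $\mathcal{A}$ from a state $A$ to a state $A'$. Then this path is unique: whenever $w=uv$ and $A\xrightarrow{u}B\xrightarrow{v}A'$ and $A\xrightarrow{u}B'\xrightarrow{v}A'$ are paths in $\mathcal{A}$, then $B=B'$.
   Context: $\Sigma$ is a finite alphabet with an involution $a\mapsto\bar a$ ($\bar{\bar a}=a$), extended to words by $\overline{a_1\cdots a_m}=\bar a_m\cdots\bar a_1$. $\kappa$ is a fixed positive integer. $\mathcal{A}_1=(Q_1,\Sigma,E_1,\{q_{01}\},F_1)$ and $\mathcal{A}_2=(Q_2,\Sigma,E_2,\{q_{02}\},F_2)$ are complete DFAs; $p\cdot w$ is the state reached from $p$ on $w$. Construction of $\mathcal{A}$: $Q_{12}=\{(q_{01}\cdot w,q_{02}\cdot w):w\in\Sigma^*\}$ with $(p_1,p_2)\cdot w=(p_1\cdot w,p_2\cdot w)$. For $(p_1,p_2,q_1,q_2)\in Q_1\times Q_2\times Q_1\times Q_2$ let $B(p_1,p_2,q_1,q_2)=\{w:p_1\cdot w=q_1,\ p_2\cdot\bar w=q_2\}$; the quadruple is a basic bridge if this set is nonempty. States of $\mathcal{A}$ are all $((p_1,p_2),q_1,q_2,\ell)$ with $(p_1,p_2)\in Q_{12}$, $q_i\in Q_i$, $\ell\in\{0,\dots,\kappa\}$, $(p_1,p_2,q_1,q_2)$ a basic bridge. For $a\in\Sigma$, $P\in Q_{12}$, $q_i\in Q_i$, there is an $a$-arc from $(P,q_1\cdot\bar a,q_2\cdot\bar a,\ell)$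 to $(P\cdot a,q_1,q_2,\ell')$, provided both are states, exactly when: $\ell=\ell'=0$ and $q_1\cdot\bar a\notin F_1$, $q_2\cdot\bar a\notin F_2$; or $\ell=0,\ell'=1$ and ($q_1\cdot\bar a\in F_1$ or $q_2\cdot\bar a\in F_2$); or $1\le\ell<\kappa$ and $\ell'=\ell+1$. Initial states: $((q_{01},q_{02}),q_1',q_2',0)$; final states: those with $\ell=\kappa$. *)

(* Defs.v *)
From mathcomp Require Import all_boot.
Set Implicit Arguments. Unset Strict Implicit. Unset Printing Implicit Defensive.

Record dfa (S : finType) := DFA {
  dstate : finType;
  dtrans : dstate -> S -> dstate;
  dinit  : dstate;
  dfinal : {set dstate} }.

Definition run (S : finType) (D : dfa S) (p : dstate D) (w : seq S) : dstate D :=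
  foldl (@dtrans S D) p w.

Definition wbar (S : Type) (bar : S -> S) (w : seq S) : seq S := rev (map bar w).

Section Construction.
Variables (S : finType) (bar : S -> S) (kappa : nat) (A1 A2 : dfa S).

Definition Q12 (P : dstate A1 * dstate A2) : Prop :=
  exists w, (run (dinit A1) w, run (dinit A2) w) = P.

Definition basic_bridge (p1 : dstate A1) (p2 : dstate A2)
  (q1 : dstate A1) (q2 : dstate A2) : Prop :=
  exists w, run p1 w = q1 /\ run p2 (wbar bar w) = q2.

Definition astate : Type :=
  ((dstate A1 * dstate A2) * dstate A1 * dstate A2 * nat)%type.

Definition is_state (s : astate) : Prop :=
  let: (P, q1, q2, l) := s in
  Q12 P /\ basic_bridge P.1 P.2 q1 q2 /\ l <= kappa.

Definition arc (a : S) (s t : astate) : Prop :=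
  let: (P, r1, r2, l) := s in
  let: (P', q1, q2, l') := t in
  [/\ is_state s, is_state t,
      P' = (dtrans P.1 a, dtrans P.2 a),
      r1 = dtrans q1 (bar a) & r2 = dtrans q2 (bar a)] /\
  [\/ [/\ l = 0, l' = 0, r1 \notin dfinal A1 & r2 \notin dfinal A2],
      [/\ l = 0, l' = 1 & (r1 \in dfinal A1 \/ r2 \in dfinal A2)]
    | 1 <= l < kappa /\ l' = l.+1].

Inductive apath : astate -> seq S -> astate -> Prop :=
  | apath_nil s : is_state s -> apath s [::] s
  | apath_cons a w s s' t : arc a s s' -> apath s' w t -> apath s (a :: w) t.

End Construction.

(* Main.v *)
Require Import Defs.
From mathcomp Require Import all_boot.

Section L.
Variables (S : finType) (bar : S -> S) (kappa : nat) (A1 A2 : dfa S).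

Definition qs (s : astate A1 A2) := let: (P, q1, q2, l) := s in (q1, q2).

Lemma back_det s w t s' t' :
  apath bar kappa s w t -> apath bar kappa s' w t' -> qs t = qs t' -> qs s = qs s'.
Proof.
move=> H; elim: H s' t' => [x _|a w0 x x1 y Ha _ IH] s' t' H'.
  by inversion H'; subst.
inversion H' as [|a' w' z z1 z2 Ha' Hp' E1 E2 E3]; subst => Hq.
have := IH _ _ Hp' Hq.
destruct x as [[[P r1] r2] l]; destruct x1 as [[[Q q1] q2] m]; move: Ha Ha'.
destruct s' as [[[P' r1'] r2'] l']; destruct z1 as [[[Q' q1'] q2'] m'] => /=.
by move=> [[_ _ _ -> ->] _] [[_ _ _ -> ->] _] [-> ->].
Qed.

Lemma fwd_det s w t t' :
  apath bar kappa s w t -> apath bar kappa s w t' -> qs t = qs t' -> t = t'.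
Proof.
move=> H; elim: H t' => [x _|a w0 x x1 y Ha H IH] t' H'.
  by inversion H'; subst.
inversion H' as [|a' w' z z1 z2 Ha' Hp' E1 E2 E3]; subst => Hq.
suff E : x1 = z1 by subst; exact: IH.
have := @back_det _ _ _ _ _ H Hp' Hq.
destruct x as [[[P r1] r2] l]; destruct x1 as [[[Q q1] q2] m]; move: Ha Ha'.
destruct z1 as [[[Q' q1'] q2'] m'] => /=.
move=> [[_ _ -> _ _] C1] [[_ _ -> _ _] C2] [<- <-].
suff -> : m = m' by [].
case: C1 => [[e1 e2 n1 n2]|[e1 e2 h]|[h1 e2]];
case: C2 => [[e1' e2' n1' n2']|[e1' e2' h']|[h1' e2']]; subst => //.
- by case: h' => h'; [move: n1 | move: n2]; rewrite h'.
- by case: h => h; [move: n1' | move: n2']; rewrite h.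
all: try by move: h1'; rewrite e1.
all: by move: h1; rewrite e1'.
Qed.
End L.

Theorem lemma2 (S : finType) (bar : S -> S) (Hbar : involutive bar)
  (kappa : nat) (Hkappa : 0 < kappa) (A1 A2 : dfa S)
  (A A' : astate A1 A2) (w : seq S)
  (Hw : apath bar kappa A (w) A') :
  forall (u v : seq S) (B B' : astate A1 A2),
    w = u ++ v ->
    apath bar kappa A u B -> apath bar kappa B v A' ->
    apath bar kappa A u B' -> apath bar kappa B' v A' ->
    B = B'.
Proof.
move=> u v B B' _ H1 H2 H3 H4.
apply: (@fwd_det _ _ _ _ _ _ _ _ _ H1 H3).
exact: (@back_det _ _ _ _ _ _ _ _ _ _ H2 H4).
Qed.
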